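(* Let $n\ge 2$ and $1\le m\le n-1$ be integers, and let $\alpha=(\alpha_0,\dots,\alpha_m)$ and $\beta=(\beta_0,\dots,\beta_m)$ be sequences of complex numbers. Let $A = T^{(\alpha,m)} - G^{(\alpha,m)}$ and $B = T^{(\beta,m)} - G^{(\beta,m)}$, where $T^{(\xi,m)}$ and $G^{(\xi,m)}$ are the $n\times n$ matrices defined in the context. Assume that $B$ is invertible. Set $h = \frac{1}{n+1/2}$ and, for $j=1,\dots,n$, $$\lambda_j = \frac{\alpha_0 + 2\sum_{l=1}^{m}\alpha_l\cos(l j\pi h)}{\beta_0 + 2\sum_{l=1}^{m}\beta_l\cos(l j\pi h)},\qquad \boldsymbol{x}_j=(x_{j,1},\dots,x_{j,n})^T,\quad x_{j,k} = C\sin\!\big(j\pi(n-k+1/2)h\big),\ k=1,\dots,n,$$ where $C\neq 0$ is a constant. Then for every $j=1,\dots,n$, $(\lambda_j,\boldsymbol{x}_j)$ is an eigenpair of the generalised matrix eigenvalue problem $A\boldsymbol{x}=\lambda B\boldsymbol{x}$, i.e. $A\boldsymbol{x}_j=\lambda_j B\boldsymbol{x}_j$.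
   Context: For a sequence $\xi=(\xi_0,\xi_1,\dots,\xi_m)$ of complex numbers and $m\le n-1$, $T^{(\xi,m)}\in\mathbb{C}^{n\times n}$ is the symmetric banded Toeplitz matrix with entries $T^{(\xi,m)}_{j,j+k}=\xi_{|k|}$ if $|k|\le m$ (for all $j$ and integers $k$ with $1\le j, j+k\le n$) and all other entries $0$. $H^{(\xi,m)}\in\mathbb{C}^{n\times n}$ is the matrix with entries $H^{(\xi,m)}_{j,k}=\xi_{j+k-1}$ for $j=1,\dots,m$, $k=1,\dots,m-j+1$; $H^{(\xi,m)}_{n-j+1,\,n-k+1}=\xi_{j+k}$ for $j=1,\dots,m-1$, $k=1,\dots,m-j$; and all other entries $0$. $G^{(\xi,m)}$ is the anti-diagonal transpose (flip across the anti-diagonal) of $H^{(\xi,m)}$, i.e. $G^{(\xi,m)}_{j,k}=H^{(\xi,m)}_{n+1-k,\,n+1-j}$ for all $j,k=1,\dots,n$. *)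

(* Defs.v *)
From HB Require Import structures.
From mathcomp Require Import all_boot all_order all_algebra.
From mathcomp Require Import complex.
From mathcomp Require Import all_classical all_reals all_analysis.
Set Implicit Arguments. Unset Strict Implicit. Unset Printing Implicit Defensive.
Import Order.TTheory GRing.Theory Num.Theory.
Local Open Scope ring_scope.

(* Matrices are 0-indexed in MathComp: the paper's row/column index j (1-based)
   corresponds to the ordinal i with val i = j - 1. *)

Definition toepT (F : nzRingType) (n m : nat) (xi : nat -> F) : 'M[F]_n :=
  \matrix_(i < n, l < n)
    let d := (subn i l + subn l i)%N in if (d <= m)%N then xi d else 0.

(* H^(xi,m): (1-based) H_{j,k} = xi_{j+k-1} for j = 1..m, k = 1..m-j+1;
   H_{n-j+1,n-k+1} = xi_{j+k} for j = 1..m-1, k = 1..m-j; 0 elsewhere.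
   With 0-based i = j-1, l = k-1 the first block is i + l + 1 <= m (value
   xi_(i+l+1)); with 0-based r = n-j, c = n-k the second block is
   (n-r)+(n-c) <= m (value xi_((n-r)+(n-c))).  The two blocks are disjoint
   when m <= n-1. *)
Definition hankH (F : nzRingType) (n m : nat) (xi : nat -> F) : 'M[F]_n :=
  \matrix_(i < n, l < n)
    let s1 := (i + l + 1)%N in
    let s2 := (subn n i + subn n l)%N in
    if (s1 <= m)%N then xi s1
    else if (s2 <= m)%N then xi s2
    else 0.

Definition hankG (F : nzRingType) (n m : nat) (xi : nat -> F) : 'M[F]_n :=
  \matrix_(i < n, l < n) hankH n m xi (rev_ord l) (rev_ord i).

Definition RtoC (R : rcfType) (x : R) : R[i] := Complex x 0.

Definition symb (R : realType) (m : nat) (xi : nat -> R[i]) (h : R) (j : nat) : R[i] :=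
  xi 0%N + 2%:R * \sum_(1 <= l < m.+1) xi l * RtoC (cos (l%:R * j%:R * pi * h)).

(* Main.v *)
Require Import Defs.
From HB Require Import structures.
From mathcomp Require Import all_boot all_order all_algebra.
From mathcomp Require Import complex.
From mathcomp Require Import all_classical all_reals all_analysis.
From mathcomp Require Import zify ring lra.
Import Order.TTheory GRing.Theory Num.Theory.
Local Open Scope ring_scope.

Lemma RtoCE (R : realType) (x : R) : RtoC x = real_complex R x.
Proof. by []. Qed.

Lemma sum_ind (V : pzRingType) n k (b : 'I_n -> bool) (f : nat -> V) :
  (forall l : 'I_n, b l = (nat_of_ord l == k)) ->
  \sum_(l < n) (b l)%:R * f l = if (k < n)%N then f k else 0.
Proof.
move=> Hb; case: ltnP => Hk.
  rewrite (bigD1 (Ordinal Hk)) //= Hb eqxx mul1r big1 ?addr0 // => l Hl.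
  rewrite Hb; case: eqP => [E|]; last by rewrite mul0r.
  by move: Hl; rewrite -val_eqE /= E eqxx.
rewrite big1 // => l _; rewrite Hb; case: eqP => [E|]; last by rewrite mul0r.
by move: (ltn_ord l); rewrite E ltnNge Hk.
Qed.

Lemma sum_ind0 (V : pzRingType) n (b : 'I_n -> bool) (f : nat -> V) :
  (forall l : 'I_n, b l = false) ->
  \sum_(l < n) (b l)%:R * f l = 0.
Proof. by move=> Hb; rewrite big1 // => l _; rewrite Hb mul0r. Qed.

Lemma sum_pick (V : pzRingType) n k (F : 'I_n -> V) (f : nat -> V) :
  (forall l : 'I_n, F l = (nat_of_ord l == k)%:R * f l) ->
  \sum_(l < n) F l = if (k < n)%N then f k else 0.
Proof.
move=> HF; rewrite -(@sum_ind _ n k (fun l : 'I_n => nat_of_ord l == k) f) //.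
exact: eq_bigr.
Qed.

Lemma sum_sel (V : pzRingType) M k (f : nat -> V) :
  \sum_(d < M) f d * (k == nat_of_ord d)%:R = if (k < M)%N then f k else 0.
Proof.
rewrite -(@sum_ind _ M k (fun d : 'I_M => (k == d))) => [|l]; last by rewrite eq_sym.
by apply: eq_bigr => d _; rewrite eq_sym; case: eqP => _; rewrite ?mulr0 ?mul0r ?mulr1 ?mul1r.
Qed.

Lemma sin_per (R : realType) (k : nat) (x : R) : sin (pi *+ 2 *+ k + x) = sin x.
Proof.
elim: k => [|k IH]; first by rewrite mulr0n add0r.
by rewrite mulrS -addrA addrC sinD2pi.
Qed.

Section Y.
Variables (R : realType) (th N : R) (j : nat).
Definition Yf (r : R) := sin (th * (N - r - 2^-1)).

Lemma Yrefl1 r : th * (N *+ 2 + 1) = pi *+ 2 *+ j -> Yf (-2 - r) = - Yf r.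
Proof.
move=> H; rewrite /Yf -sinN -(@sin_per R j (- _)) -H; congr sin.
have h2 : (2:R) != 0 by rewrite pnatr_eq0.
by field.
Qed.

Lemma Yrefl2 r : Yf (N *+ 2 - 1 - r) = - Yf r.
Proof.
rewrite /Yf -sinN; congr sin.
have h2 : (2:R) != 0 by rewrite pnatr_eq0.
by field.
Qed.

Lemma Ysum r d : Yf (r + d) + Yf (r - d) = 2 * cos (d * th) * Yf r.
Proof.
rewrite /Yf.
have -> : th * (N - (r + d) - 2^-1) = th * (N - r - 2^-1) - d * th by ring.
have -> : th * (N - (r - d) - 2^-1) = th * (N - r - 2^-1) + d * th by ring.
rewrite sinB sinD; ring.
Qed.
End Y.

Section Col.
Variables (R : realType) (g : R -> R[i]) (n m : nat).
Hypothesis Hg1 : forall r, g (-2 - r) = - g r.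
Hypothesis Hg2 : forall r, g (n%:R *+ 2 - 1 - r) = - g r.

Lemma S1 i d : (i < n)%N -> (0 < d)%N ->
  \sum_(l < n) ((i - l + (l - i) == d)%N%:R * g l%:R) =
  (if (i + d < n)%N then g (i%:R + d%:R) else 0) +
  (if (d <= i)%N then g (i%:R - d%:R) else 0).
Proof.
move=> Hi d0.
under eq_bigr => l _.
  have -> : ((i - l + (l - i) == d)%N%:R : R[i]) = (nat_of_ord l == i + d)%N%:R + (nat_of_ord l + d == i)%N%:R.
    rewrite -natrD; congr (_%:R).
    by case: eqP => ?; case: eqP => ?; case: eqP => ?; simpl; lia.
  rewrite mulrDl.
over.
rewrite big_split /=.
rewrite (@sum_pick _ n (i + d)%N _ (fun r => g r%:R)) // natrD.
case: (leqP d i) => Hdi.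
  rewrite (@sum_pick _ n (i - d)%N _ (fun r => g r%:R)); last first.
    move=> l; congr (_ * _).
    by have -> : ((l + d)%N == i) = (nat_of_ord l == (i - d)%N) by apply/idP/idP => /eqP ?; apply/eqP; lia.
  have -> : (i - d < n)%N by lia.
  by rewrite natrB.
rewrite big1 ?addr0 // => l _.
have -> : ((l + d)%N == i) = false by apply/negbTE/eqP; lia.
by rewrite mul0r.
Qed.

Lemma S2 i d : (i < n)%N -> (d < n)%N ->
  \sum_(l < n) (((n - l.+1 + (n - i.+1) + 1)%N == d)%:R * g l%:R) =
  (if (n <= i + d)%N then g (n%:R *+ 2 - 1 - (i%:R + d%:R)) else 0).
Proof.
move=> Hi Hd.
rewrite (@sum_pick _ n (n + n - (i + d).+1)%N _ (fun r => g r%:R)); last first.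
  move=> l; congr (_ * _); have Hl := ltn_ord l.
  by have -> : ((n - l.+1 + (n - i.+1) + 1)%N == d) = (nat_of_ord l == (n + n - (i + d).+1)%N)
    by apply/idP/idP => /eqP ?; apply/eqP; lia.
case: (leqP n (i + d)) => H.
  have -> : (n + n - (i + d).+1 < n)%N by lia.
  rewrite natrB; last by lia.
  by congr g; rewrite !natrD mulr2n; ring.
by have -> : (n + n - (i + d).+1 < n)%N = false by lia.
Qed.

Lemma S3 i d : (i < n)%N -> (d < n)%N ->
  \sum_(l < n) (((n - (n - l.+1) + (n - (n - i.+1)))%N == d)%:R * g l%:R) =
  (if (i.+2 <= d)%N then g (d%:R - 2 - i%:R) else 0).
Proof.
move=> Hi Hd.
case: (leqP i.+2 d) => H.
  rewrite (@sum_pick _ n (d - i.+2)%N _ (fun r => g r%:R)); last first.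
    move=> l; congr (_ * _); have Hl := ltn_ord l.
    by have -> : ((n - (n - l.+1) + (n - (n - i.+1)))%N == d) = (nat_of_ord l == (d - i.+2)%N)
      by apply/idP/idP => /eqP ?; apply/eqP; lia.
  have -> : (d - i.+2 < n)%N by lia.
  rewrite natrB // ; congr g; rewrite -addn2 natrD; ring.
rewrite big1 // => l _; have Hl := ltn_ord l.
have -> : ((n - (n - l.+1) + (n - (n - i.+1)))%N == d) = false by apply/negbTE/eqP; lia.
by rewrite mul0r.
Qed.

Lemma colsum i d : (i < n)%N -> (0 < d)%N -> (d < n)%N ->
  \sum_(l < n) ((((i - l + (l - i))%N == d)%:R
      - ((n - l.+1 + (n - i.+1) + 1)%N == d)%:R
      - ((n - (n - l.+1) + (n - (n - i.+1)))%N == d)%:R) * g l%:R) =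
  g (i%:R + d%:R) + g (i%:R - d%:R).
Proof.
move=> Hi d0 Hd.
under eq_bigr => l _ do rewrite !mulrBl.
rewrite !sumrB S1 // S2 // S3 //.
have Hm1 : g (-1) = 0.
  have := Hg1 (-1); rewrite (_ : -2 - -1 = -1 :> R); last by ring.
  move=> /eqP; rewrite -subr_eq0 opprK -mulr2n mulrn_eq0 /= => /eqP //.
case: (ltnP (i + d) n) => Hf.
  try (have -> : (n <= i + d)%N = false by lia).
  case: (leqP d i) => Hb.
    try (have -> : (i.+2 <= d)%N = false by lia).
    by rewrite !subr0.
  try (have -> : (d <= i)%N = false by lia).
  case: (eqVneq d i.+1) => [Ed|Ne].
    try (have -> : (i.+2 <= d)%N = false by lia).
    rewrite Ed -addn1 natrD (_ : i%:R - (i%:R + 1) = -1 :> R); last by ring.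
    by rewrite Hm1 !subr0 addr0.
  try (have -> : (i.+2 <= d)%N by lia).
  rewrite [in RHS](_ : i%:R - d%:R = -2 - (d%:R - 2 - i%:R) :> R); last by ring.
  by rewrite Hg1 addr0 subr0.
try (have -> : (i + d < n)%N = false by lia).
try (have -> : (n <= i + d)%N by lia).
rewrite Hg2.
case: (leqP d i) => Hb.
  try (have -> : (i.+2 <= d)%N = false by lia).
  by rewrite add0r subr0 opprK addrC.
try (have -> : (d <= i)%N = false by lia).
case: (eqVneq d i.+1) => [Ed|Ne].
  try (have -> : (i.+2 <= d)%N = false by lia).
  rewrite Ed -addn1 natrD (_ : i%:R - (i%:R + 1) = -1 :> R); last by ring.
  by rewrite Hm1; ring.
try (have -> : (i.+2 <= d)%N by lia).
rewrite [in RHS](_ : i%:R - d%:R = -2 - (d%:R - 2 - i%:R) :> R); last by ring.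
by rewrite Hg1; ring.
Qed.
End Col.

Lemma entry (F : comNzRingType) n m (a : nat -> F) (i l : 'I_n) : (m <= n - 1)%N ->
  (toepT n m a - hankG n m a) i l =
  \sum_(d < m.+1) a d * ((((i - l + (l - i))%N == d)%:R
      - ((n - l.+1 + (n - i.+1) + 1)%N == d)%:R
      - ((n - (n - l.+1) + (n - (n - i.+1)))%N == d)%:R)).
Proof.
move=> Hm; have Hi := ltn_ord i; have Hl := ltn_ord l.
rewrite !mxE /=.
under eq_bigr => d _ do rewrite !mulrBr.
rewrite !sumrB !sum_sel !ltnS.
case: (leqP (n - l.+1 + (n - i.+1) + 1)%N m) => H1.
  have -> : (n - (n - l.+1) + (n - (n - i.+1)) <= m)%N = false by lia.
  by rewrite subr0.
by rewrite subr0.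
Qed.

Lemma col0 (F : pzRingType) n (i : nat) (G : nat -> F) : (i < n)%N ->
  \sum_(l < n) ((((i - l + (l - i))%N == 0%N)%:R
      - ((n - l.+1 + (n - i.+1) + 1)%N == 0%N)%:R
      - ((n - (n - l.+1) + (n - (n - i.+1)))%N == 0%N)%:R) * G l) = G i.
Proof.
move=> Hi; rewrite (@sum_pick _ n i _ G) ?Hi // => l.
have Hl := ltn_ord l.
have -> : ((n - l.+1 + (n - i.+1) + 1)%N == 0%N) = false by apply/negbTE/eqP; lia.
have -> : ((n - (n - l.+1) + (n - (n - i.+1)))%N == 0%N) = false by apply/negbTE/eqP; lia.
have -> : ((i - l + (l - i))%N == 0%N) = (nat_of_ord l == i) by apply/idP/idP => /eqP ?; apply/eqP; lia.
by rewrite !subr0.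
Qed.

Lemma rowA (R : realType) (g : R -> R[i]) n m (a : nat -> R[i]) (Cc : R[i]) (cs : nat -> R[i]) (k : 'I_n) :
  (forall r, g (-2 - r) = - g r) -> (forall r, g (n%:R *+ 2 - 1 - r) = - g r) ->
  (m <= n - 1)%N ->
  (forall k d : nat, g (k%:R + d%:R) + g (k%:R - d%:R) = 2%:R * cs d * g k%:R) ->
  \sum_(l < n) (toepT n m a - hankG n m a) k l * (Cc * g l%:R) =
  (a 0%N + 2%:R * \sum_(1 <= d < m.+1) a d * cs d) * (Cc * g k%:R).
Proof.
move=> Hg1 Hg2 Hm Hs; have Hk := ltn_ord k.
under eq_bigr => l _ do rewrite entry // mulr_suml.
rewrite exchange_big /=.
under eq_bigr => d _ do (under eq_bigr => l _ do rewrite mulrACA; rewrite -mulr_sumr).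
rewrite big_ord_recl /= (@col0 _ n k (fun r => g r%:R)) //.
under eq_bigr => d _.
  have Hd := ltn_ord d.
  rewrite (@colsum R g n Hg1 Hg2 k (bump 0 d)) ?Hs //; try (rewrite /bump /=; lia).
  over.
rewrite big_add1 /= big_mkord mulrDl mulrA; congr (_ + _).
rewrite -mulrA mulr_suml mulr_sumr; apply: eq_bigr => d _.
rewrite /bump /= add1n; ring.
Qed.

Theorem mainTheorem2 (R : realType) (n m : nat) (alpha beta : nat -> R[i])
  (Cc : R[i]) (j : nat) :
  (2 <= n)%N -> (1 <= m)%N -> (m <= n - 1)%N ->
  (toepT n m beta - hankG n m beta) \in unitmx ->
  Cc != 0 ->
  (1 <= j <= n)%N ->
  let A := toepT n m alpha - hankG n m alpha in
  let B := toepT n m beta - hankG n m beta in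
  let h : R := (n%:R + 2%:R^-1)^-1 in
  let lambda := symb m alpha h j / symb m beta h j in
  let x : 'cV[R[i]]_n :=
    \col_(k < n) (Cc * RtoC (sin (j%:R * pi * ((subn n k.+1)%:R + 2%:R^-1) * h))) in
  A *m x = lambda *: (B *m x).
Proof.
move=> Hn Hm1 Hm Bu Cc0 Hj A B h lambda x.
pose N : R := n%:R.
pose th : R := j%:R * pi * h.
pose g := fun r : R => RtoC (@Yf R th N r).
have hpos : N + 2^-1 != 0.
  apply: lt0r_neq0; apply: addr_gt0; last by rewrite invr_gt0 ltr0n.
  by rewrite /N ltr0n; lia.
have Hth : th * (N *+ 2 + 1) = pi *+ 2 *+ j.
  rewrite /th /h -/N -[pi *+ 2 *+ j]mulr_natr -mulr_natr.
  have h2 : (2:R) != 0 by rewrite pnatr_eq0.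
  field; first done.
have Hg1 : forall r, g (-2 - r) = - g r.
  by move=> r; rewrite /g (@Yrefl1 R th N j r Hth) !RtoCE rmorphN.
have Hg2 : forall r, g (n%:R *+ 2 - 1 - r) = - g r.
  by move=> r; rewrite /g (@Yrefl2 R th N r) !RtoCE rmorphN.
pose cs := fun d : nat => RtoC (cos (d%:R * j%:R * pi * h)).
have Hs : forall k d : nat, g (k%:R + d%:R) + g (k%:R - d%:R) = 2%:R * cs d * g k%:R.
  move=> k d; rewrite /g /cs !RtoCE -rmorphD Ysum -!mulrA.
  by rewrite !rmorphM rmorph_nat /th !mulrA.
have hx : forall (l : 'I_n) c0, x l c0 = Cc * g l%:R.
  move=> l c0; rewrite /x mxE /g /Yf /th /N; congr (_ * RtoC (sin _)).
  rewrite natrB ?ltn_ord // -addn1 natrD.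
  have h2 : (2:R) != 0 by rewrite pnatr_eq0.
  by field.
have rowX : forall a (k : 'I_n) c, ((toepT n m a - hankG n m a) *m x) k c = symb m a h j * (Cc * g k%:R).
  move=> a k c; rewrite mxE.
  under eq_bigr => l _ do rewrite hx.
  by rewrite (@rowA R g n m a Cc cs k Hg1 Hg2 Hm Hs).
apply/matrixP => k c.
rewrite /A rowX [in RHS]mxE /B rowX /lambda.
have [Hb|Hb] := eqVneq (symb m beta h j) 0; last by rewrite [RHS]mulrA divfK.
have Bx0 : B *m x = 0.
  by apply/matrixP => k' c'; rewrite /B rowX Hb mul0r mxE.
have x0 : x = 0 by rewrite -(mulKmx Bu x) -/B Bx0 mulmx0.
have := congr1 (fun M : 'cV[R[i]]_n => M k c) x0.
by rewrite /= hx mxE => ->; rewrite !mulr0.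
Qed.
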